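(* If exactly one agent $i$ cuts one or more links due to confirmation bias (so that $T^*$ differs from $T$ only in row $i$, with $T^*_{ij}=0<T_{ij}$ for at least one $j\neq i$), then agent $i$'s influence strictly increases: $s^*_i>s_i$.
   Context: Agents $N=\{1,\dots,n\}$ communicate through a network $T$, an $n\times n$ row-stochastic matrix with entries $T_{ij}\in[0,1]$, assumed strongly connected and aperiodic. Each agent has an initial belief $x_{i0}\in[0,1]$. Confirmation bias of strength $q\in[0,1]$ produces $T^*$: for $j\ne i$, if $|x_{i0}-x_{j0}|>1-q$ then $T^*_{ij}=0$ and $T_{ij}$ is added to the self-link $T^*_{ii}$; otherwise $T^*_{ij}=T_{ij}$. $T^*$ is assumed strongly connected. The influence vector $s$ of a network $P$ is the left eigenvector for eigenvalue $1$ normalized to sum to $1$ ($s=sP$); $s,s^*$ are the influence vectors of $T,T^*$. *)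

(* Defs.v *)
From HB Require Import structures.
From mathcomp Require Import all_boot all_order all_algebra.
From mathcomp Require Import reals.
Set Implicit Arguments. Unset Strict Implicit. Unset Printing Implicit Defensive.
Import Order.TTheory GRing.Theory Num.Theory.
Local Open Scope ring_scope.

Section Defs.
Variables (R : realType) (n : nat).

Definition row_stochastic (T : 'M[R]_n) : Prop :=
  (forall i j, 0 <= T i j <= 1) /\ (forall i, \sum_j T i j = 1).

Definition net_rel (T : 'M[R]_n) : rel 'I_n := fun i j => 0 < T i j.

Definition strongly_connected (T : 'M[R]_n) : Prop :=
  forall i j : 'I_n, connect (net_rel T) i j.

Definition closed_walk (T : 'M[R]_n) (i : 'I_n) (k : nat) : Prop :=
  exists p : seq 'I_n, [/\ size p = k, path (net_rel T) i p & last i p = i].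

Definition aperiodic (T : 'M[R]_n) : Prop :=
  forall d : nat, (forall i k, closed_walk T i k -> (d %| k)%N) -> d = 1%N.

Definition cuts (x0 : 'I_n -> R) (q : R) (i j : 'I_n) : bool :=
  (i != j) && (1 - q < `|x0 i - x0 j|).

Definition Tstar (T : 'M[R]_n) (x0 : 'I_n -> R) (q : R) : 'M[R]_n :=
  \matrix_(i, j)
    if i == j then T i i + \sum_(k | cuts x0 q i k) T i k
    else if cuts x0 q i j then 0 else T i j.

Definition influence_vector (P : 'M[R]_n) (s : 'rV[R]_n) : Prop :=
  s *m P = s /\ \sum_j s 0 j = 1.

End Defs.

(* Main.v *)
Require Import Defs.
From HB Require Import structures.
From mathcomp Require Import all_boot all_order all_algebra.
From mathcomp Require Import reals lra.
Import Order.TTheory GRing.Theory Num.Theory.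
Local Open Scope ring_scope.

Lemma maxp (R : realType) n (T : 'M[R]_n) (i : 'I_n) (v : 'I_n -> R) :
 (forall a b, 0 <= T a b) -> (forall a, \sum_b T a b = 1) ->
 (forall a b, connect (net_rel T) a b) ->
 v i = 0 -> (forall j, j != i -> v j = \sum_k T j k * v k) -> forall k, v k <= 0.
Proof.
move=> T0 T1 conn vi vj.
pose m := [arg max_(k > i) v k]%O.
have mmax : forall k, v k <= v m.
  by rewrite /m; case: arg_maxP => // j _ H k; apply: H.
suff: v m <= 0 by move=> H k; exact: le_trans (mmax k) H.
rewrite leNgt; apply/negP => Mpos.
have step : forall a b, v a = v m -> 0 < T a b -> v b = v m.
  move=> a b va Tab.
  have ai : a != i by apply/eqP => ai; move: Mpos; rewrite -va ai vi ltxx.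
  have H0 : \sum_k T a k * (v m - v k) = 0.
    under eq_bigr do rewrite mulrBr.
    by rewrite sumrB -mulr_suml T1 mul1r -vj // va subrr.
  have H1 : T a b * (v m - v b) = 0.
    by apply: (psumr_eq0P _ H0) => // k _; rewrite mulr_ge0 // subr_ge0.
  by move/eqP: H1; rewrite mulf_eq0 (gt_eqF Tab) /= subr_eq0 => /eqP <-.
have : connect (net_rel T) m i by apply: conn.
case/connectP => p pth ilast.
have : v (last m p) = v m.
  have gen : forall x, v x = v m -> path (net_rel T) x p -> v (last x p) = v m.
    elim: p {pth ilast} => [|z p IH] x //= Hx /andP [Hxz Hp].
    by apply: IH => //; apply: step Hx Hxz.
  exact: gen.
by rewrite -ilast vi => H; move: Mpos; rewrite -H ltxx.
Qed.
Arguments maxp {R n T i v}.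

Lemma vzero (R : realType) n (T : 'M[R]_n) (i : 'I_n) (v : 'I_n -> R) :
 (forall a b, 0 <= T a b) -> (forall a, \sum_b T a b = 1) ->
 (forall a b, connect (net_rel T) a b) ->
 v i = 0 -> (forall j, j != i -> v j = \sum_k T j k * v k) -> forall k, v k = 0.
Proof.
move=> T0 T1 conn vi vj k.
apply/eqP; rewrite eq_le (maxp T0 T1 conn vi vj k) /=.
rewrite -oppr_le0; apply: (maxp (i := i) (v := fun k => - v k) T0 T1 conn) => [|j ji].
  by rewrite /= vi oppr0.
by rewrite /= vj // -sumrN; apply: eq_bigr => l _; rewrite mulrN.
Qed.
Arguments vzero {R n T i v}.

Lemma sum_delta (R : realFieldType) n (f : 'I_n -> R) i : \sum_k f k * (k == i)%:R = f i.
Proof. under eq_bigr do rewrite mulr_natr mulrb. by rewrite -big_mkcond big_pred1_eq. Qed.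

Lemma fin (R : realFieldType) (x y a b : R) : 0 <= b -> b < a -> x * (1 + a) = 1 -> y * (1 + b) = 1 -> x < y.
Proof.
move=> b0 ba hx hy.
have hy0 : 0 < y by nra.
have h1 : 1 < y * (1 + a) by nra.
nra. Qed.
Arguments fin {R x y a b}.

Lemma key (R : realType) n (P : 'M[R]_n) (s : 'rV[R]_n) i (h : 'I_n -> R) :
 s *m P = s -> \sum_j s 0 j = 1 -> h i = 0 ->
 (forall j, j != i -> h j = 1 + \sum_k P j k * h k) ->
 s 0 i * (1 + \sum_k P i k * h k) = 1.
Proof.
move=> sP s1 hi hj.
have E : \sum_k s 0 k * h k = \sum_j s 0 j * \sum_k P j k * h k.
  transitivity (\sum_k (\sum_j s 0 j * P j k) * h k).
    by apply: eq_bigr => k _; congr (_ * _); rewrite -{1}sP mxE.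
  under eq_bigr do rewrite mulr_suml.
  rewrite exchange_big /=; apply: eq_bigr => j _; rewrite mulr_sumr.
  by apply: eq_bigr => k _; rewrite mulrA.
have E2 : \sum_(j | j != i) s 0 j * \sum_k P j k * h k =
   \sum_(j | j != i) s 0 j * h j - \sum_(j | j != i) s 0 j.
  rewrite -sumrB; apply: eq_bigr => j ji; rewrite (hj j ji).
  by rewrite mulrDr mulr1 addrAC subrr add0r.
rewrite (bigD1 i) //= hi mulr0 add0r in E.
rewrite [X in _ = X](bigD1 i) //= E2 in E.
rewrite (bigD1 i) //= in s1.
rewrite mulrDr mulr1.
lra.
Qed.
Arguments key {R n P s i h}.

Theorem mainTheorem3 (R : realType) (n : nat) (T : 'M[R]_n)
  (x0 : 'I_n -> R) (q : R) (s sstar : 'rV[R]_n) (i : 'I_n) :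
  row_stochastic T -> strongly_connected T -> aperiodic T ->
  (forall k, 0 <= x0 k <= 1) -> 0 <= q <= 1 ->
  strongly_connected (Tstar T x0 q) ->
  influence_vector T s -> influence_vector (Tstar T x0 q) sstar ->
  (forall k j, k != i -> Tstar T x0 q k j = T k j) ->
  (exists j, j != i /\ Tstar T x0 q i j = 0 /\ 0 < T i j) ->
  s 0 i < sstar 0 i.
Proof.
move=> [Tb T1] conn _ _ _ _ [sT s1] [sT' s1'] rows [j0 [j0i [Tsj0 Tj0]]].
have T0 : forall a b, 0 <= T a b by move=> a b; case/andP: (Tb a b).
pose B := \matrix_(k, j) (if j == i then (k == i)%:R else (k == j)%:R - T j k) : 'M[R]_n.
have Binj : forall v : 'rV[R]_n, v *m B = 0 -> v = 0.
  move=> v vB0.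
  have Heq : forall j, (v *m B) 0 j = 0 by move=> j; rewrite vB0 mxE.
  have vi : v 0 i = 0.
    by have := Heq i; rewrite mxE /B (eq_bigr (fun k => v 0 k * (k == i)%:R)) ?sum_delta // => k _; rewrite mxE eqxx.
  have vj : forall j, j != i -> v 0 j = \sum_k T j k * v 0 k.
    move=> j ji; have := Heq j; rewrite mxE /B; under eq_bigr do rewrite mxE (negbTE ji).
    under eq_bigr do rewrite mulrBr.
    rewrite sumrB sum_delta => /eqP; rewrite subr_eq0 => /eqP ->.
    by apply: eq_bigr => l _; apply: mulrC.
  by apply/rowP => k; rewrite mxE; apply: (vzero T0 T1 conn vi vj).
have Bu : B \in unitmx.
  rewrite -row_free_unit -kermx_eq0; apply/eqP/row_matrixP => r; rewrite row0.
  by apply: Binj; rewrite -row_mul mulmx_ker row0.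
pose b : 'rV[R]_n := \row_j (if j == i then 0 else 1).
have [hv hB] : exists hv : 'rV[R]_n, hv *m B = b.
  by exists (b *m invmx B); rewrite mulmxKV.
pose h k := hv 0 k.
have eqh : forall j, (hv *m B) 0 j = b 0 j by move=> j; rewrite hB.
have hi : h i = 0.
  have := eqh i; rewrite /B !mxE (eqxx i) (eq_bigr (fun k => hv 0 k * (k == i)%:R)); last by move=> k _; rewrite [X in _ * X = _]mxE (eqxx i).
  by rewrite sum_delta.
have hj : forall j, j != i -> h j = 1 + \sum_k T j k * h k.
  move=> j ji; have ji2 : (j == i) = false by apply: negbTE.
  rewrite /h; have := eqh j; rewrite /B !mxE ji2.
  under eq_bigr do rewrite [X in _ * X]mxE ji2.
  under eq_bigr do rewrite mulrBr.
  rewrite sumrB sum_delta => /eqP; rewrite subr_eq addrC => /eqP ->.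
  by rewrite addrC; congr (_ + _); apply: eq_bigr => k _; apply: mulrC.
have hge : forall k, 0 <= h k.
  pose m := [arg min_(k < i) h k]%O.
  have mmin : forall k, h m <= h k.
    by rewrite /m; case: arg_minP => // j _ H k; apply: H.
  move=> k; apply: le_trans (mmin k); rewrite leNgt; apply/negP => mneg.
  have mi : m != i by apply/eqP => mi; move: mneg; rewrite mi hi ltxx.
  have : 1 + h m <= h m.
    rewrite {2}(hj m mi) lerD2l.
    rewrite -[X in X <= _]mul1r -(T1 m) mulr_suml.
    by apply: ler_sum => l _; rewrite ler_wpM2l.
  by rewrite gerDr ler10.
have hj' : forall j, j != i -> h j = 1 + \sum_k Tstar T x0 q j k * h k.
  by move=> j ji; rewrite hj //; congr (_ + _); apply: eq_bigr => k _; rewrite rows.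
have K1 := key sT s1 hi hj.
have K2 := key sT' s1' hi hj'.
have Tsk : forall k, k != i -> Tstar T x0 q i k = 0 \/ Tstar T x0 q i k = T i k.
  move=> k ki; rewrite mxE eq_sym (negbTE ki).
  by case: ifP => _; [left|right].
have Ta : forall k, Tstar T x0 q i k * h k <= T i k * h k.
  move=> k; case: (eqVneq k i) => [->|ki]; first by rewrite hi !mulr0.
  by case: (Tsk k ki) => ->; rewrite ?mul0r ?mulr_ge0.
have a0 : 0 <= \sum_k Tstar T x0 q i k * h k.
  apply: sumr_ge0 => k _; case: (eqVneq k i) => [->|ki]; first by rewrite hi mulr0.
  by case: (Tsk k ki) => ->; rewrite ?mul0r ?mulr_ge0.
have alt : \sum_k Tstar T x0 q i k * h k < \sum_k T i k * h k.
  rewrite (bigD1 j0) //= [X in _ < X](bigD1 j0) //=.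
  apply: ltr_leD; last by apply: ler_sum => k _; apply: Ta.
  rewrite Tsj0 mul0r; apply: mulr_gt0 => //.
  have := hj j0 j0i; move=> ->.
  by apply: ltr_pwDl => //; apply: sumr_ge0 => k _; rewrite mulr_ge0.
exact: fin a0 alt K1 K2.
Qed.
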